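(* For every positive integer $n$, the number \[ a_n:=\frac{1}{8n^2\binom{2n}{n}^2}\sum_{k=0}^{n-1}(-1)^{n-1-k}\binom{2k}{k}^5(205k^2+160k+32) \] is a positive integer. *)

(* Defs.v *)
From mathcomp Require Import all_boot all_order all_algebra.
Set Implicit Arguments. Unset Strict Implicit. Unset Printing Implicit Defensive.
Import Order.TTheory GRing.Theory Num.Theory.
Local Open Scope ring_scope.

Definition a_seq (n : nat) : rat :=
  (8 * (n%:R) ^+ 2 * ('C(2 * n, n))%:R ^+ 2)^-1 *
  \sum_(0 <= k < n)
     (-1) ^+ (n - 1 - k)%N * ('C(2 * k, k))%:R ^+ 5
       * (205 * (k%:R) ^+ 2 + 160 * k%:R + 32).

(* Main.v *)
Require Import Defs.
From mathcomp Require Import all_boot all_order all_algebra.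
From mathcomp Require Import ring lra zify.
Import Order.TTheory GRing.Theory Num.Theory.
Local Open Scope ring_scope.

Lemma L1 (j e : nat) : ('C(j + e, j.+1)%:R : rat) = 'C(j + e, j)%:R * e%:R / j.+1%:R.
Proof.
have h := mul_bin_left (j + e) j.
rewrite (_ : (j + e - j = e)%N) in h; last by lia.
apply: (@mulIf _ j.+1%:R); first by rewrite pnatr_eq0.
rewrite mulfVK ?pnatr_eq0 // -!natrM mulnC h mulnC //.
Qed.

Lemma L2 (j e : nat) : ('C(j + e + 1, j)%:R : rat) = 'C(j + e, j)%:R * (j + e + 1)%:R / (e + 1)%:R.
Proof.
have h := mul_bin_down (j + e + 1) j.
rewrite (_ : (j + e + 1 - j = e + 1)%N) in h; last by lia.
rewrite (_ : ((j + e + 1).-1 = j + e)%N) in h; last by lia.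
apply: (@mulIf _ (e + 1)%:R); first by rewrite pnatr_eq0 addn1.
rewrite mulfVK ?pnatr_eq0 ?addn1 // -!natrM; congr (_%:R); rewrite !addn1 in h; rewrite mulnC -h mulnC //.
Qed.

Lemma L3 (j e : nat) : ('C(j + e + 1, j.+1)%:R : rat) = 'C(j + e, j)%:R * (j + e + 1)%:R / j.+1%:R.
Proof.
have h := mul_bin_diag (j + e + 1) j.
rewrite (_ : ((j + e + 1).-1 = j + e)%N) in h; last by lia.
apply: (@mulIf _ j.+1%:R); first by rewrite pnatr_eq0.
rewrite mulfVK ?pnatr_eq0 // -!natrM mulnC -h mulnC //.
Qed.

Definition Fw (n j : nat) : rat := (-1) ^+ j * ((n%:R * 'C(2 * n, n)%:R) ^+ 2 * ('C((2 * n).-1, j)%:R * 'C(n.-1 + j, j)%:R ^+ 2)).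
Definition Rw (n k : nat) : rat := (2 * n%:R * (n%:R + 1) * (30 * n%:R + 11) + k%:R * (12 * n%:R ^+ 2 + 47 * n%:R + 16) - (21 * n%:R + 8) * k%:R ^+ 2) / (8 * (2 * n%:R + 1) ^+ 3).
Definition Gw (n j : nat) : rat := Rw n j.+1 * Fw n.+1 j.

Lemma Lc (n : nat) : ('C(2 * n.+1, n.+1)%:R : rat) = 'C(2 * n, n)%:R * (2 * (2 * n%:R + 1)) / (n%:R + 1).
Proof.
rewrite (_ : (2 * n.+1 = n + n.+1 + 1)%N); last by lia.
rewrite (L3 n n.+1) (_ : (n + n.+1 = n + n + 1)%N); last by lia.
rewrite (L2 n n) (_ : (n + n = 2 * n)%N); last by lia.
rewrite -[n.+1]addn1 !natrD ?natrM.
field.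
have := ler0n rat n; lra.
Qed.


Lemma step (m d : nat) : Gw (m + d + 2) m + (Fw (m + d + 2).+1 m.+1 - Fw (m + d + 2) m.+1) = Gw (m + d + 2) m.+1.
Proof.
rewrite /Gw /Fw Lc.
set c := 'C(2 * (m + d + 2), m + d + 2).
rewrite (_ : ((2 * (m + d + 2)).-1 = m + (m + 2 * d + 3))%N); last by lia.
rewrite (_ : ((2 * (m + d + 2).+1).-1 = m + (m + 2 * d + 5))%N); last by lia.
rewrite (_ : ((m + d + 2).-1 + m.+1 = m + (m + d + 2))%N); last by lia.
rewrite (_ : ((m + d + 2).+1.-1 + m = m + (m + d + 1) + 1)%N); last by lia.
rewrite (_ : ((m + d + 2).+1.-1 + m.+1 = m + (m + d + 3))%N); last by lia.
rewrite (L1 m (m + 2 * d + 5)) (L1 m (m + 2 * d + 3)).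
rewrite (_ : (m + (m + 2 * d + 5) = m + (m + 2 * d + 4) + 1)%N); last by lia.
rewrite (L2 m (m + 2 * d + 4)).
rewrite (_ : (m + (m + 2 * d + 4) = m + (m + 2 * d + 3) + 1)%N); last by lia.
rewrite (L2 m (m + 2 * d + 3)).
rewrite (L1 m (m + d + 3)).
rewrite (_ : (m + (m + d + 3) = m + (m + d + 2) + 1)%N); last by lia.
rewrite (L2 m (m + d + 2)) (L1 m (m + d + 2)).
rewrite (_ : (m + (m + d + 2) = m + (m + d + 1) + 1)%N); last by lia.
rewrite (L2 m (m + d + 1)).
set u := 'C(m + (m + 2 * d + 3), m).
set v := 'C(m + (m + d + 1), m).
rewrite /Rw !exprS !expr0.
field.
have := ler0n rat m; have := ler0n rat d => *.
by repeat (apply/andP; split); apply: lt0r_neq0; lra.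
Qed.

Lemma base (d : nat) : Fw d.+2 0 - Fw d.+1 0 = Gw d.+1 0.
Proof.
rewrite /Gw /Fw !bin0 Lc /Rw !exprS !expr0.
field.
have := ler0n rat d => *.
by repeat (apply/andP; split); apply: lt0r_neq0; lra.
Qed.

Lemma diag (d : nat) : Fw d.+2 d.+1 + Gw d.+1 d =
  (-1) ^+ d.+1 * 'C(2 * d.+1, d.+1)%:R ^+ 5 * (205 * d.+1%:R ^+ 2 + 160 * d.+1%:R + 32) / 8.
Proof.
rewrite /Gw /Fw Lc.
rewrite (_ : ((2 * d.+2).-1 = d + (d + 3))%N); last by lia.
rewrite (_ : (d.+2.-1 + d.+1 = d + (d + 1) + 1)%N); last by lia.
rewrite (_ : (d.+2.-1 + d = d + (d + 1))%N); last by lia.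
rewrite (_ : (2 * d.+1 = d + (d + 1) + 1)%N); last by lia.
rewrite (L3 d (d + 1)) (L1 d (d + 3)).
rewrite (_ : (d + (d + 3) = d + (d + 2) + 1)%N); last by lia.
rewrite (L2 d (d + 2)).
rewrite (_ : (d + (d + 2) = d + (d + 1) + 1)%N); last by lia.
rewrite (L2 d (d + 1)).
rewrite /Rw !exprS !expr0.
field.
have := ler0n rat d => *.
by repeat (apply/andP; split); apply: lt0r_neq0; lra.
Qed.

Lemma tele (d m : nat) : (m <= d)%N -> \sum_(j < m.+1) (Fw d.+2 j - Fw d.+1 j) = Gw d.+1 m.
Proof.
elim: m => [|m IH] hm.
  by rewrite big_ord1 base.
rewrite big_ord_recr /= IH; last by lia.
have E : d.+1 = (m + (d - m.+1) + 2)%N by lia.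
by rewrite E step.
Qed.

Definition T (n : nat) : rat := \sum_(j < n) Fw n j.

Lemma Trec (d : nat) : T d.+2 = T d.+1 + (Fw d.+2 d.+1 + Gw d.+1 d).
Proof.
rewrite /T big_ord_recr /= -(@tele d d (leqnn d)).
rewrite [RHS]addrCA addrC; congr (_ + _).
by rewrite -big_split /=; apply: eq_bigr => i _; rewrite addrC subrK.
Qed.

Definition fk (k : nat) : rat := 'C(2 * k, k)%:R ^+ 5 * (205 * k%:R ^+ 2 + 160 * k%:R + 32).

Definition SS (n : nat) : rat := \sum_(0 <= k < n)
     (-1) ^+ (n - 1 - k)%N * ('C(2 * k, k))%:R ^+ 5
       * (205 * (k%:R) ^+ 2 + 160 * k%:R + 32).

Lemma SSrec n : SS n.+1 = fk n - SS n.
Proof.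
rewrite /SS big_nat_recr //= (_ : (n.+1 - 1 - n = 0)%N); last by lia.
rewrite expr0 mul1r addrC /fk; congr (_ + _).
rewrite -sumrN; apply: eq_big_nat => k /andP[_ hk].
rewrite (_ : (n.+1 - 1 - k = (n - 1 - k).+1)%N); last by lia.
rewrite exprS; ring.
Qed.

Lemma sign2 (n : nat) : (-1) ^+ n * (-1) ^+ n = 1 :> rat.
Proof.
elim: n => [|n IH]; first by rewrite expr0 mulr1.
rewrite exprS -[RHS]IH; ring.
Qed.

Lemma S_T n : SS n.+1 = 8 * (-1) ^+ n * T n.+1.
Proof.
elim: n => [|n IH].
  rewrite /SS /T big_nat1 big_ord1 /Fw /=.
  rewrite (_ : (1 - 1 - 0 = 0)%N) // !bin0 (_ : 'C(2 * 1, 1) = 2%N) //.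
rewrite SSrec IH Trec diag /fk.
have := sign2 n.
set s := (-1) ^+ n.
set c := 'C(2 * n.+1, n.+1)%:R.
set q := (205 * _ + _ + _).
move=> h; apply/eqP; rewrite -subr_eq0; apply/eqP.
rewrite [(-1) ^+ n.+1]exprS -/s.
set t := T n.+1.
clearbody s c q t.
transitivity (c ^+ 5 * q * (1 - s * s)); first by field.
by rewrite h subrr mulr0.
Qed.
Lemma binle n : ('C(2 * n, n) <= 'C(2 * n.+1, n.+1))%N.
Proof.
rewrite (_ : (2 * n.+1 = (2 * n).+2)%N); last by lia.
rewrite !binS; lia.
Qed.

Lemma fk_lt n : fk n < fk n.+1.
Proof.
rewrite /fk.
have h1 : ('C(2 * n, n)%:R : rat) <= 'C(2 * n.+1, n.+1)%:R by rewrite ler_nat binle.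
have h0 : (0 : rat) < 'C(2 * n, n)%:R by rewrite ltr0n bin_gt0; lia.
have h5 := lerXn2r 5 (ltW h0 : _ \is Num.nneg) (le_trans (ltW h0) h1 : _ \is Num.nneg) h1.
have h6 : (0 : rat) < 'C(2 * n, n)%:R ^+ 5 by rewrite exprn_gt0.
move: h5 h6; set A := _ ^+ 5; set B := _ ^+ 5; clearbody A B => h5 h6.
have := ler0n rat n => hn.
rewrite -!natr1 in h5 h6 *.
nra.
Qed.

Lemma SS1 : SS 1 = fk 0.
Proof.
rewrite /SS big_nat1 /fk.
rewrite subnn sub0n expr0 mul1r //.
Qed.
Lemma fk0 : fk 0 = 32.
Proof. rewrite /fk bin0 expr1n mul1r. ring. Qed.

Lemma SSpos n : 0 < SS n.+1 /\ SS n.+1 <= fk n.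
Proof.
elim: n => [|n [IH1 IH2]].
  rewrite SS1 fk0; split; lra.
rewrite SSrec; move: (fk_lt n) IH1 IH2; generalize (fk n) (fk n.+1) (SS n.+1) => a b c.
lra.
Qed.
Theorem corollary14 (n : nat) : (0 < n)%N ->
  exists m : nat, (0 < m)%N /\ a_seq n = m%:R.
Proof.
case: n => [//|k] _.
set B := \sum_(j < k.+1) (-1) ^+ j * ('C((2 * k.+1).-1, j)%:R * 'C(k.+1.-1 + j, j)%:R ^+ 2) : rat.
have HT : T k.+1 = (k.+1%:R * 'C(2 * k.+1, k.+1)%:R) ^+ 2 * B.
  rewrite /T /Fw /B mulr_sumr; apply: eq_bigr => j _; by rewrite mulrCA.
have Ha : a_seq k.+1 = (8 * k.+1%:R ^+ 2 * ('C(2 * k.+1, k.+1))%:R ^+ 2)^-1 * SS k.+1 by [].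
have Hc : ('C(2 * k.+1, k.+1)%:R : rat) != 0 by rewrite pnatr_eq0 -lt0n bin_gt0; lia.
have HA : a_seq k.+1 = (-1) ^+ k * B.
  rewrite Ha S_T HT.
  move: Hc; set c := 'C(2 * k.+1, k.+1)%:R; set s := (-1) ^+ k; clearbody c s B => Hc.
  field.
  rewrite Hc /=; have := ler0n rat k; move=> *; apply: lt0r_neq0; lra.
have Hpos : 0 < a_seq k.+1.
  rewrite Ha; apply: mulr_gt0; last by case: (SSpos k).
  rewrite invr_gt0; apply: mulr_gt0; last by rewrite exprn_gt0 // lt0r Hc ler0n.
  apply: mulr_gt0 => //; rewrite exprn_gt0 // ltr0n.
have Hint : (-1) ^+ k * B \is a Num.int.
  apply: rpredM; first by apply: rpredX; apply: rpredN; apply: rpred1.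
  apply: rpred_sum => j _; apply: rpredM; first by apply: rpredX; apply: rpredN; apply: rpred1.
  by apply: rpredM; [apply: rpred_nat | apply: rpredX; apply: rpred_nat].
rewrite -HA in Hint.
have : a_seq k.+1 \is a Num.nat by rewrite -intrEge0 // ltW.
case/natrP => m Hm; exists m; split => //.
by move: Hpos; rewrite Hm ltr0n.
Qed.
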